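(* Let $n\ge 2$ and $\sigma,\tau\in S_n$ with $\sigma^{\sf CT}\neq\tau^{\sf CT}$. Let $\omega$ and $\pi$ be the cycles of the disjoint cycle decomposition of $\sigma^{-1}\tau$ containing $n-1$ and $\sigma(n-1)$, respectively (a cycle being $(0)$, the identity, if the symbol is fixed). Suppose $\sigma^{-1}\tau=\rho\,\omega\,\pi$ if $\omega\neq\pi$ and $\sigma^{-1}\tau=\rho\,\omega$ if $\omega=\pi$, where $\rho\in S_n$ is disjoint from $\omega$ and $\pi$. Then $(\sigma^{\sf CT})^{-1}\tau^{\sf CT}=\rho\,\chi$ for some $\chi\in S_{n-1}$ disjoint from $\rho$, and: (1) if ${\rm hd}(\sigma^{\sf CT},\tau^{\sf CT})={\rm hd}(\sigma,\tau)$, then $\omega=(0)$ or $\pi=(0)$, and $\chi$ is a cycle with $|\chi|=|\omega\pi|$; (2) if ${\rm hd}(\sigma^{\sf CT},\tau^{\sf CT})={\rm hd}(\sigma,\tau)-1$, then (a) if $\omega=\pi$, either $\chi$ is a cycle with $|\chi|=|\omega|-1$, or $\chi$ is a product of two disjoint cycles $\omega',\pi'$ with $|\omega'|+|\pi'|=|\omega|-1$; (b) if $\omega\neq\pi$, $\chi$ is a cycle with $|\chi|=|\omega|+|\pi|-1$; (3) if ${\rm hd}(\sigma^{\sf CT},\tau^{\sf CT})={\rm hd}(\sigma,\tau)-2$, then $\omega=\pi$ and $\chi$ is a cycle with $|\chi|=|\omega|-2$; (4) if ${\rm hd}(\sigma^{\sf CT},\tau^{\sf CT})={\rm hd}(\sigma,\tau)-3$,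 then $\omega=\pi$, $|\omega|=3$ and $\chi=(0)$.
   Context: $S_n$ is the symmetric group on $\{0,1,\ldots,n-1\}$, with composition from left to right: $\tau\sigma(x):=\sigma(\tau(x))$, so $\sigma^{-1}\tau(x)=\tau(\sigma^{-1}(x))$. ${\rm hd}(\sigma,\tau)=|\{x:\sigma(x)\neq\tau(x)\}|$. The contraction of $\sigma\in S_n$ is $\sigma^{\sf CT}\in S_{n-1}$ (on $\{0,\ldots,n-2\}$) defined by $\sigma^{\sf CT}(x)=\sigma(n-1)$ if $x=\sigma^{-1}(n-1)$ and $\sigma^{\sf CT}(x)=\sigma(x)$ otherwise (i.e. delete $n-1$ from the cycle notation of $\sigma$). $|\rho|$ denotes the length of a cycle $\rho$; the identity permutation, written $(0)$, is regarded as a cycle of length $0$, and a symbol fixed by a permutation is said to belong to a cycle of length zero in its decomposition. When one of $\omega,\pi$ is $(0)$, $\omega\pi$ is a cycle and $|\omega\pi|$ is its length. *)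

(* Defs.v *)
(* Permutations of {0,...,n-1} are {perm 'I_n}.
   MathComp's product of permutations composes left to right:
   (s * t) x = t (s x)  (lemma permM), matching the paper's convention. *)
From mathcomp Require Import all_boot all_fingroup.
Set Implicit Arguments. Unset Strict Implicit. Unset Printing Implicit Defensive.
Import GroupScope.

Definition psupp (T : finType) (g : {perm T}) : {set T} := [set x | g x != x].

Definition hd (T : finType) (s t : {perm T}) : nat := #|[set x | s x != t x]|.

(* A permutation is a cycle (the identity (0) counting as the cycle of length 0)
   iff all symbols it moves lie in a single orbit. *)
Definition is_cycle (T : finType) (g : {perm T}) : bool :=
  [exists x, psupp g \subset porbit g x].

Definition cyc_len (T : finType) (g : {perm T}) : nat := #|psupp g|.

(* the cycle of the disjoint cycle decomposition of g containing x
   (the identity if x is fixed by g) *)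
Definition cycle_of_fun (T : finType) (g : {perm T}) (x : T) (y : T) : T :=
  if y \in porbit g x then g y else y.

Lemma porbit_step (T : finType) (g : {perm T}) x y :
  (g y \in porbit g x) = (y \in porbit g x).
Proof.
have E : porbit g (g y) = porbit g y by rewrite -(porbit_perm g 1 y) expg1.
by rewrite porbit_sym E porbit_sym.
Qed.

Lemma cycle_of_inj (T : finType) (g : {perm T}) (x : T) :
  injective (cycle_of_fun g x).
Proof.
move=> y z; rewrite /cycle_of_fun.
case: ifP => Hy; case: ifP => Hz.
- exact: perm_inj.
- by move=> E; move: Hz; rewrite -E porbit_step Hy.
- by move=> E; move: Hy; rewrite E porbit_step Hz.
- done.
Qed.

Definition cycle_of (T : finType) (g : {perm T}) (x : T) : {perm T} :=
  perm (@cycle_of_inj T g x).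

(* Contraction s^CT in S_{n-1} of s in S_n (here n = m.+1, and n-1 = ord_max):
   s^CT x = s(n-1) if s x = n-1, and s x otherwise.  We compute it as the
   restriction to 'I_m of s * (n-1, s(n-1)) (apply s, then the transposition),
   which fixes n-1. *)
Definition ct_fun (m : nat) (s : {perm 'I_m.+1}) (x : 'I_m) : 'I_m :=
  odflt x (unlift ord_max ((s * tperm ord_max (s ord_max)) (lift ord_max x))).

Lemma ct_fun_inj (m : nat) (s : {perm 'I_m.+1}) : injective (ct_fun s).
Proof.
set t := s * tperm ord_max (s ord_max).
have Ht : t ord_max = ord_max by rewrite permM tpermR.
have Hne z : ord_max != t (lift ord_max z).
  by rewrite -{1}Ht (inj_eq perm_inj) neq_lift.
move=> y z; rewrite /ct_fun -/t.
case: (unlift_some (Hne y)) => ky Ey ->.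
case: (unlift_some (Hne z)) => kz Ez -> /= Ek.
by apply: (@lift_inj _ ord_max); apply: (@perm_inj _ t); rewrite Ey Ez Ek.
Qed.

Definition ct (m : nat) (s : {perm 'I_m.+1}) : {perm 'I_m} := perm (@ct_fun_inj m s).

Definition liftp (m : nat) (c : {perm 'I_m}) : {perm 'I_m.+1} :=
  lift_perm ord_max ord_max c.

(* Main.v *)
Require Import Defs.
From mathcomp Require Import all_boot all_fingroup.
From mathcomp Require Import zify.
Import GroupScope.
Set Implicit Arguments. Unset Strict Implicit. Unset Printing Implicit Defensive.

Section Gen.
Variable T : finType.
Implicit Types (f g : {perm T}) (s p q : seq T) (x y z : T).

Lemma inpsupp f x : (x \in psupp f) = (f x != x).
Proof. by rewrite inE. Qed.

Lemma psupp_img f x : (f x \in psupp f) = (x \in psupp f).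
Proof. by rewrite !inpsupp (inj_eq perm_inj). Qed.

Lemma disjP (A B : {set T}) : (forall x, x \in A -> x \notin B) -> [disjoint A & B].
Proof. by move=> H; rewrite disjoint_subset; apply/subsetP => x /H. Qed.

Lemma psupp_mulU f f' : [disjoint psupp f & psupp f'] ->
  psupp (f * f') = psupp f :|: psupp f'.
Proof.
move=> D; apply/setP => x; rewrite !inE permM.
case: (eqVneq (f x) x) => [->|H] //=.
have H1 : f x \in psupp f by rewrite psupp_img inpsupp.
have := disjointFr D H1; rewrite inpsupp => /negbFE/eqP ->.
by [].
Qed.

Lemma card_psupp_mul f f' : [disjoint psupp f & psupp f'] ->
  #|psupp (f * f')| = #|psupp f| + #|psupp f'|.
Proof.
by move=> D; rewrite psupp_mulU // cardsU (disjoint_setI0 D) cards0 subn0.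
Qed.

Lemma psupp_mul_sub f f' : psupp (f * f') \subset psupp f :|: psupp f'.
Proof.
apply/subsetP => x; rewrite !inE permM; apply: contraR.
by rewrite negb_or !negbK => /andP[/eqP -> /eqP ->].
Qed.

Lemma hd_psupp f f' : hd f f' = #|psupp (f^-1 * f')|.
Proof.
have -> : psupp (f^-1 * f') = f @: [set x | f x != f' x].
  apply/setP => y; rewrite inpsupp permM -{1 3}(permKV f y) mem_imset ?inE //.
  - by rewrite permKV eq_sym.
  - exact: perm_inj.
by rewrite card_imset //; exact: perm_inj.
Qed.

Lemma next_undup_inj s : injective (next (undup s)).
Proof. have H := prev_next (undup_uniq s); exact: can_inj H. Qed.

Definition cperm s : {perm T} := perm (@next_undup_inj s).

Lemma cpermE s : uniq s -> cperm s =1 next s.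
Proof. by move=> U x; rewrite permE undup_id. Qed.

Lemma next_notin s x : x \notin s -> next s x = x.
Proof. by rewrite next_nth => /negbTE ->. Qed.

Lemma next_inj s x y : uniq s -> next s x = next s y -> x = y.
Proof. move=> U; have H := prev_next U; exact: (can_inj H). Qed.

Lemma next_mid {p} {p1 p2 : seq T} {x y} : uniq p -> p = p1 ++ x :: y :: p2 -> next p x = y.
Proof.
move=> U E; subst p; rewrite -(next_rot (size p1) U) rot_size_cat /= eqxx //.
Qed.

Lemma next_last x q : uniq (x :: q) -> next (x :: q) (last x q) = x.
Proof.
case: q => [|y q] U; first by rewrite /= eqxx.
by rewrite -(next_rotr 1 U) [x :: _]lastI rotr1_rcons /= eqxx.
Qed.

Lemma next_head x q : next (x :: q) x = head x q.
Proof. by case: q => [|y q] /=; rewrite eqxx. Qed.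

Lemma cperm_small s : size s <= 1 -> cperm s = 1.
Proof.
move=> Hs; apply/permP => x; rewrite perm1 permE.
case: s Hs => [|y [|z s]] //= _.
by case: eqP => [->|].
Qed.

Lemma next_neq s x : uniq s -> 1 < size s -> x \in s -> next s x != x.
Proof.
move=> U Hs xs; case/splitPr: xs U Hs => p1 p2 U Hs.
case: p2 U Hs => [|y p2] U Hs.
  case: p1 U Hs => [|z p1] // U _.
  have E1 : (z :: p1) ++ [:: x] = z :: rcons p1 x by rewrite cats1.
  have H : next (z :: rcons p1 x) (last z (rcons p1 x)) = z.
    by apply: next_last; rewrite -cats1.
  rewrite last_rcons in H; rewrite E1 H.
  apply/eqP => zx; move: U; rewrite -zx /= mem_cat inE eqxx orbT //.
rewrite (next_mid U (erefl _)); apply/eqP => yx.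
by move: U; rewrite cat_uniq /= yx inE eqxx /= !andbF.
Qed.

Lemma psupp_cperm s : uniq s -> 1 < size s -> psupp (cperm s) = [set x in s].
Proof.
move=> U Hs; apply/setP => x; rewrite inpsupp cpermE // inE.
case xs: (x \in s); first by rewrite next_neq.
by rewrite next_notin ?xs ?eqxx.
Qed.

Lemma psupp_cperm_sub s : uniq s -> psupp (cperm s) \subset [set x in s].
Proof.
move=> U; case: (ltnP 1 (size s)) => H; first by rewrite psupp_cperm.
rewrite cperm_small //; apply/subsetP => x; rewrite inpsupp perm1 eqxx //.
Qed.

Lemma card_psupp_cperm s : uniq s ->
  #|psupp (cperm s)| = if 1 < size s then size s else 0.
Proof.
move=> U; case: ifP => H.
  by rewrite psupp_cperm // cardsE (card_uniqP U).
rewrite cperm_small; last by rewrite leqNgt H.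
apply/eqP; rewrite cards_eq0; apply/eqP/setP => x; rewrite inpsupp perm1 eqxx inE //.
Qed.

Lemma iter_next x q i : uniq (x :: q) -> i < size (x :: q) ->
  iter i (next (x :: q)) x = nth x (x :: q) i.
Proof.
move=> U; elim: i => [|i IH] Hi; first by [].
rewrite iterS IH ?(ltnW Hi) // next_nth mem_nth ?(ltnW Hi) //.
by rewrite index_uniq ?(ltnW Hi).
Qed.

Lemma is_cycle_cperm s (x0 : T) : uniq s -> is_cycle (cperm s).
Proof.
move=> U; case: s U => [|x q] U.
  apply/existsP; exists x0; rewrite cperm_small //; apply/subsetP => y.
  by rewrite inpsupp perm1 eqxx.
apply/existsP; exists x; apply/subsetP => y; rewrite inpsupp cpermE // => H.
have ys : y \in x :: q by apply: contraR H => /next_notin ->; rewrite eqxx.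
rewrite -(nth_index x ys) -iter_next ?index_mem //.
rewrite -(eq_iter (cpermE U)) -permX; exact: mem_porbit.
Qed.

Definition tr g x := traject g x #|porbit g x|.

Lemma tr_cons g x : tr g x = x :: behead (tr g x).
Proof. by rewrite /tr; case: #|_| (card_porbit_neq0 g x). Qed.

Lemma tr_uniq g x : uniq (tr g x).
Proof. exact: uniq_traject_porbit. Qed.

Lemma mem_tr g x y : (y \in tr g x) = (y \in porbit g x).
Proof. by rewrite /tr -porbit_traject. Qed.

Lemma tr_fcycle g x : fcycle g (tr g x).
Proof.
rewrite /tr; have := iter_porbit g x.
case: #|_| (card_porbit_neq0 g x) => // n _ It.
rewrite trajectS /= -[x in rcons _ x]It iterSr -trajectSr.
exact: fpath_traject.
Qed.

Lemma cycle_ofE g x : cycle_of g x = cperm (tr g x).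
Proof.
apply/permP => y; rewrite permE /cycle_of_fun cpermE ?tr_uniq //.
case: ifP => H; first by rewrite (nextE (tr_fcycle g x)) // mem_tr.
by rewrite next_notin // mem_tr H.
Qed.

Lemma cyc_supp g x0 x : x \in porbit g x0 -> g x != x ->
  x \in psupp (cycle_of g x0).
Proof. by move=> H1 H2; rewrite inpsupp permE /cycle_of_fun H1. Qed.

Lemma commute_tperm f x y : f x = x -> f y = y -> tperm x y * f = f * tperm x y.
Proof.
move=> fx fy; apply/permP => z; rewrite !permM.
case: tpermP => [->|->|zx zy]; rewrite ?fx ?fy ?tpermL ?tpermR //.
rewrite tpermD //; apply/eqP => E.
- by apply: zx; apply: (@perm_inj _ f); rewrite fx.
- by apply: zy; apply: (@perm_inj _ f); rewrite fy.
Qed.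

End Gen.


Section Lift.
Variable m : nat.
Local Notation N := (@ord_max m).
Implicit Types (c d : {perm 'I_m}) (f : {perm 'I_m.+1}).

Lemma liftp_ct f : liftp (ct f) = f * tperm N (f N).
Proof.
apply/permP => x; case: (unliftP N x) => [y|] ->.
  rewrite /liftp lift_perm_lift /ct permE /ct_fun.
  set t := f * tperm N (f N).
  have Ht : t N = N by rewrite permM tpermR.
  have Hne : N != t (lift N y).
    by rewrite -{1}Ht (inj_eq perm_inj) neq_lift.
  by case: (unlift_some Hne) => k -> ->.
by rewrite /liftp lift_perm_id permM tpermR.
Qed.

Lemma liftpM c d : liftp (c * d) = liftp c * liftp d.
Proof. by rewrite /liftp lift_permM. Qed.

Lemma liftpV c : liftp c^-1 = (liftp c)^-1.
Proof. by rewrite /liftp lift_permV. Qed.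

Lemma liftp1 : @liftp m 1 = 1.
Proof. exact: lift_perm1. Qed.

Lemma liftpN c : liftp c N = N.
Proof. exact: lift_perm_id. Qed.

Lemma liftp_lift c x : liftp c (lift N x) = lift N (c x).
Proof. exact: lift_perm_lift. Qed.

Lemma liftp_inj : injective (@liftp m).
Proof.
move=> c d E; apply/permP => y; apply: (@lift_inj _ N).
by rewrite -!liftp_lift E.
Qed.

Lemma ct_liftp f : f N = N -> liftp (ct f) = f.
Proof. by move=> H; rewrite liftp_ct H tperm1 mulg1. Qed.

Lemma psupp_liftp c : psupp (liftp c) = lift N @: psupp c.
Proof.
apply/setP => y; case: (unliftP N y) => [x|] ->.
  by rewrite mem_imset ?inpsupp ?liftp_lift ?(inj_eq (@lift_inj _ _)) //; exact: lift_inj.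
rewrite inpsupp liftpN eqxx; apply/esym/imsetP => -[x _ /eqP].
by rewrite (negbTE (neq_lift _ _)).
Qed.

Lemma psupp_liftp_lift c x : (lift N x \in psupp (liftp c)) = (x \in psupp c).
Proof. by rewrite !inpsupp liftp_lift (inj_eq (@lift_inj _ _)). Qed.

Lemma card_psupp_liftp c : #|psupp (liftp c)| = #|psupp c|.
Proof. by rewrite psupp_liftp card_imset //; exact: lift_inj. Qed.

Lemma liftp_X c i x : (liftp c ^+ i) (lift N x) = lift N ((c ^+ i) x).
Proof.
elim: i => [|i IH]; first by rewrite !expg0 !perm1.
by rewrite !expgSr !permM IH liftp_lift.
Qed.

Lemma is_cycle_liftp (x0 : 'I_m) c : is_cycle (liftp c) -> is_cycle c.
Proof.
case/existsP => y H.
case: (unliftP N y) => [x|] Ey; rewrite Ey in H.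
  apply/existsP; exists x; apply/subsetP => z Hz.
  have : lift N z \in porbit (liftp c) (lift N x).
    by apply: (subsetP H); rewrite psupp_liftp_lift.
  case/porbitP => i; rewrite liftp_X => /lift_inj ->; exact: mem_porbit.
apply/existsP; exists x0; apply/subsetP => z Hz.
have : lift N z \in porbit (liftp c) N.
  by apply: (subsetP H); rewrite psupp_liftp_lift.
case/porbitP => i; rewrite permX_fix ?liftpN // => /eqP.
by rewrite eq_sym (negbTE (neq_lift _ _)).
Qed.

Lemma disjoint_liftp c d : [disjoint psupp (liftp c) & psupp (liftp d)] ->
  [disjoint psupp c & psupp d].
Proof.
move=> D; apply: disjP => x Hx.
have H1 : lift N x \in psupp (liftp c) by rewrite psupp_liftp_lift.
by have := disjointFr D H1; rewrite psupp_liftp_lift => ->.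
Qed.

End Lift.


Section Core.
Variable T : finType.
Implicit Types (L p q A B : seq T) (x y z N a b : T).

Lemma next_last' {x q z} : uniq (x :: q) -> last x q = z -> next (x :: q) z = x.
Proof. by move=> U <-; apply: next_last. Qed.

Lemma split_eq x p : x \in p -> exists p1 p2, p = p1 ++ x :: p2.
Proof. by case/splitPr => p1 p2; exists p1, p2. Qed.

Lemma coreI N a b A B : uniq (N :: A ++ B) -> last N A = a ->
  next (N :: A ++ B) a = b ->
  tperm N a * cperm (N :: A ++ B) * tperm N b = cperm A * cperm B.
Proof.
set L := N :: A ++ B => U La Hb.
move: (U) => /= /andP[]; rewrite mem_cat negb_or => /andP[NA NB].
rewrite cat_uniq => /and3P[UA /hasPn DBA UB].
have DAB : forall x, x \in A -> x \notin B.
  by move=> x xA; apply/negP => /DBA; rewrite xA.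
have Es : L = belast N A ++ a :: B by rewrite /L -cat_rcons -La -lastI.
have aNA : a \in N :: A by rewrite -La mem_last.
have as_ : a \in L by rewrite Es mem_cat inE eqxx orbT.
have bs : b \in L by rewrite -Hb mem_next.
have injn : forall x y, next L x = next L y -> x = y.
  by move=> x y; apply: next_inj.
apply/permP => x; rewrite !permM !cpermE //.
case: (eqVneq x N) => [->|xN].
  by rewrite tpermL Hb tpermR !next_notin.
case: (eqVneq x a) => [Exa|xa].
  subst x; have aA : a \in A by move: aNA; rewrite inE (negbTE xN).
  have [c [A' EA]] : exists c A', A = c :: A'.
    by case: (A) aA => // c A' _; exists c, A'.
  have Ec : next L N = c by rewrite /L next_head EA.
  have cA : c \in A by rewrite EA inE eqxx.
  rewrite tpermR Ec tpermD.
  - rewrite EA next_last'; last by move: La; rewrite EA.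
      by rewrite next_notin //; exact: DAB.
    by rewrite -EA.
  - by apply: contraNneq NA => ->.
  - apply/eqP => E; have : next L a = next L N by rewrite Hb Ec E.
    by move/injn => Ea; rewrite Ea eqxx in xN.
case xA: (x \in A).
  have [A1 [A2 EA]] := split_eq xA.
  case: A2 EA => [|y A3] EA.
    by move: La; rewrite EA last_cat /= => Ex; rewrite Ex eqxx in xa.
  have yA : y \in A by rewrite EA mem_cat !inE eqxx !orbT.
  have Ey : next L x = y.
    by apply: (next_mid (p1 := N :: A1) (p2 := A3 ++ B) U); rewrite /L EA -catA.
  rewrite [tperm N a x]tpermD ?(eq_sym N) ?(eq_sym a) // Ey (next_mid UA EA) tpermD.
  - by rewrite next_notin //; exact: DAB.
  - by apply: contraNneq NA => ->.
  - by apply/eqP => E; move/eqP: xa; apply; apply: injn; rewrite Ey Hb E.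
case xB: (x \in B).
  have [B1 [B2 EB]] := split_eq xB.
  have xa' : a != x by rewrite eq_sym.
  rewrite [tperm N a x]tpermD ?(eq_sym N) // (next_notin (x := x) (s := A)) ?xA //.
  case: B2 EB => [|y B3] EB.
    have Ex : next L x = N.
      apply: next_last'; first by [].
      by rewrite EB catA last_cat.
    rewrite Ex tpermL.
    case: B1 EB => [|z B1] EB.
      have : next L a = x by apply: (next_mid (p1 := belast N A) (p2 := [::]) U); rewrite Es EB.
      by rewrite Hb => ->; rewrite EB /= eqxx.
    have : next L a = z by apply: (next_mid (p1 := belast N A) (p2 := B1 ++ [:: x]) U); rewrite Es EB.
    rewrite Hb => ->; rewrite EB; apply/esym/next_last'; first by move: UB; rewrite EB.
    by rewrite last_cat.
  have Ey : next L x = y by apply: (next_mid (p1 := N :: A ++ B1) (p2 := B3) U); rewrite /L EB catA.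
  rewrite Ey (next_mid UB EB) tpermD //.
  - by apply: contraNneq NB => ->; rewrite EB mem_cat !inE eqxx !orbT.
  - by apply/eqP => E; move/eqP: xa; apply; apply: injn; rewrite Ey Hb E.
have xs : x \notin L by rewrite /L inE mem_cat xA xB (negbTE xN).
have xa' : a != x by rewrite eq_sym.
have xN' : N != x by rewrite eq_sym.
have xb : b != x by apply: contraNneq xs => <-.
rewrite [tperm N a x]tpermD // (next_notin xs) tpermD //.
by rewrite !next_notin ?xA ?xB.
Qed.

Lemma coreII N a A B : uniq (N :: A ++ a :: B) ->
  tperm N a * (cperm (N :: A) * cperm (a :: B)) * tperm N (head a B) =
  cperm (a :: A ++ B).
Proof.
move=> U0.
have U1 : uniq (N :: A) by move: U0; rewrite -cat_cons cat_uniq => /andP[].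
have U2 : uniq (a :: B) by move: U0; rewrite -cat_cons cat_uniq => /and3P[].
have D12 : forall x, x \in a :: B -> x \notin N :: A.
  move: U0; rewrite -cat_cons cat_uniq => /and3P[_ /hasPn H _] x /H //.
have U : uniq (a :: A ++ B).
  by move: U0 => /= /andP[_]; rewrite -cat1s uniq_catCA cat1s.
set L := a :: A ++ B.
have NA : N \notin A by move: U1 => /andP[].
set b := head a B.
have bB : b \in a :: B by rewrite /b; case: (B) => [|z B'] /=; rewrite !inE eqxx ?orbT.
have aNA := D12 a (mem_head _ _).
have bNA := D12 b bB.
have Na : N != a by apply: contraNneq aNA => ->; exact: mem_head.
have Nb : N != b by apply: contraNneq bNA => ->; exact: mem_head.
have NL : N \notin L.
  apply/negP; rewrite /L inE mem_cat => /or3P [/eqP E | NA' | NB'].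
  - by rewrite E eqxx in Na.
  - by move: U1 => /andP[/negP].
  - by move: (D12 N); rewrite inE NB' orbT inE eqxx => /(_ isT).
have Hb : next (a :: B) a = b by rewrite next_head.
have injn2 : forall x y, next (a :: B) x = next (a :: B) y -> x = y.
  by move=> x y; apply: next_inj.
apply/permP => x; rewrite !permM !cpermE //.
case: (eqVneq x N) => [->|xN].
  by rewrite tpermL (next_notin aNA) Hb tpermR (next_notin NL).
case: (eqVneq x a) => [->|xa].
  rewrite tpermR next_head /L next_head.
  case EA: A => [|c A'].
    change (tperm N b (next (a :: B) N) = b).
    rewrite next_notin ?tpermL //; apply/negP => H.
    by move: (D12 N H); rewrite mem_head.
  change (tperm N b (next (a :: B) c) = c).
  have cA : c \in N :: A by rewrite EA !inE eqxx orbT.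
  have cB : c \notin a :: B := contraL (D12 c) cA.
  rewrite next_notin // tpermD //.
  - by apply: contraNneq NA => ->; rewrite EA mem_head.
  - by apply: contraNneq cB => <-.
case xA: (x \in A).
  have [A1 [A2 EA]] := split_eq xA.
  rewrite [tperm N a x]tpermD ?(eq_sym N) ?(eq_sym a) //.
  case: A2 EA => [|y A3] EA.
    have E1 : next (N :: A) x = N.
      by apply: next_last'; rewrite // EA last_cat.
    rewrite E1 next_notin; last by apply: contraL (mem_head N A); exact: D12.
    rewrite tpermL /b /L.
    case EB: B => [|z B'].
      by apply/esym/next_last'; rewrite -?EB // EB cats0 EA last_cat.
    have U' : uniq (a :: A ++ z :: B') by rewrite -EB.
    apply/esym/(next_mid (p1 := a :: A1) (p2 := B') U').
    by rewrite EA -catA.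
  have yA : y \in N :: A by rewrite EA inE mem_cat !inE eqxx !orbT.
  have yB : y \notin a :: B by apply: contraL yA; exact: D12.
  rewrite (next_mid (p1 := N :: A1) (p2 := A3) (x := x) (y := y) U1); last by rewrite EA.
  rewrite next_notin // tpermD.
  - by apply/esym/(next_mid (p1 := a :: A1) (p2 := A3 ++ B) U); rewrite /L EA -catA.
  - by apply: contraNneq NA => ->; rewrite EA mem_cat !inE eqxx !orbT.
  - by apply: contraNneq yB => <-.
case xB: (x \in B).
  have [B1 [B2 EB]] := split_eq xB.
  have xNA : x \notin N :: A by apply: D12; rewrite inE xB orbT.
  rewrite [tperm N a x]tpermD ?(eq_sym N) ?(eq_sym a) // (next_notin xNA).
  case: B2 EB => [|y B3] EB.
    have E1 : next (a :: B) x = a.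
      by apply: next_last'; rewrite // EB last_cat.
    rewrite E1 tpermD //.
    - by apply/esym/next_last'; rewrite // EB catA last_cat.
    - apply/eqP => E; move/eqP: xa; apply; apply: injn2; by rewrite E1 Hb E.
  have Ey : next (a :: B) x = y.
    by apply: (next_mid (p1 := a :: B1) (p2 := B3) U2); rewrite EB.
  have yB : y \in B by rewrite EB mem_cat !inE eqxx !orbT.
  rewrite Ey tpermD.
  - by apply/esym/(next_mid (p1 := a :: A ++ B1) (p2 := B3) U); rewrite /L EB catA.
  - by apply: contraNneq NL => ->; rewrite /L inE mem_cat yB !orbT.
  - apply/eqP => E; move/eqP: xa; apply; apply: injn2; by rewrite Ey Hb E.
have xs : x \notin L by rewrite /L inE mem_cat xA xB (negbTE xa).
have x1 : x \notin N :: A by rewrite inE xA (negbTE xN).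
have x2 : x \notin a :: B by rewrite inE xB (negbTE xa).
have xa' : a != x by rewrite eq_sym.
have xN' : N != x by rewrite eq_sym.
have xb : b != x by apply: contraNneq x2 => <-.
rewrite [tperm N a x]tpermD // (next_notin x1) (next_notin x2) tpermD //.
by rewrite next_notin.
Qed.

End Core.


Definition F (n : nat) := if 1 < n then n else 0.

Lemma Fspec n : (1 < n /\ F n = n) \/ (n <= 1 /\ F n = 0).
Proof. rewrite /F; case: ltnP; [left | right]; by []. Qed.

Lemma card_cperm (T : finType) (s : seq T) : uniq s -> #|psupp (cperm s)| = F (size s).
Proof. exact: card_psupp_cperm. Qed.

Lemma cperm_out (T : finType) (s : seq T) x : x \notin s -> cperm s x = x.
Proof. by move=> H; rewrite permE next_notin // mem_undup. Qed.

Lemma cperm_disj (T : finType) (A B : seq T) :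
  uniq A -> (forall x, x \in A -> x \notin B) ->
  [disjoint psupp (cperm A) & psupp (cperm B)].
Proof.
move=> UA D; apply: disjP => x /(subsetP (psupp_cperm_sub UA)); rewrite inE => /D xB.
by rewrite inpsupp negbK cperm_out.
Qed.

Section Lift2.
Variable m : nat.
Local Notation N := (@ord_max m).

Lemma lift_cperm (x0 : 'I_m) (s : seq 'I_m.+1) : uniq s -> N \notin s ->
  [/\ liftp (ct (cperm s)) = cperm s, is_cycle (ct (cperm s)) &
      cyc_len (ct (cperm s)) = F (size s)].
Proof.
move=> U Ns.
have E : liftp (ct (cperm s)) = cperm s by rewrite ct_liftp // cperm_out.
split => //.
  by apply: (is_cycle_liftp x0); rewrite E; exact: (@is_cycle_cperm _ s N U).
by rewrite /cyc_len -card_psupp_liftp E card_cperm.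
Qed.

End Lift2.

Section Arith.
Variables (r x y : nat).
Local Open Scope nat_scope.

Lemma LI1 : r + (F x + F y) = r + F (x + y).+1 -> x = 0 /\ y = 0.
Proof. have := Fspec x; have := Fspec y; have := Fspec (x + y).+1; lia. Qed.

Lemma LI2 : r + (F x + F y) + 1 = r + F (x + y).+1 -> F x + F y + 1 = F (x + y).+1.
Proof. lia. Qed.

Lemma LI3 : r + (F x + F y) + 2 = r + F (x + y).+1 ->
  (x <= 1 \/ y <= 1) /\ F x + F y + 2 = F (x + y).+1.
Proof. have := Fspec x; have := Fspec y; have := Fspec (x + y).+1; lia. Qed.

Lemma LI4 : r + (F x + F y) + 3 = r + F (x + y).+1 -> x = 1 /\ y = 1.
Proof. have := Fspec x; have := Fspec y; have := Fspec (x + y).+1; lia. Qed.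

Lemma LII1 : r + F (x + y).+1 = r + (F x.+1 + F y.+1) -> x = 0 \/ y = 0.
Proof. have := Fspec x.+1; have := Fspec y.+1; have := Fspec (x + y).+1; lia. Qed.

Lemma LII2 : r + F (x + y).+1 + 1 = r + (F x.+1 + F y.+1) ->
  0 < x /\ F (x + y).+1 + 1 = F x.+1 + F y.+1.
Proof. have := Fspec x.+1; have := Fspec y.+1; have := Fspec (x + y).+1; lia. Qed.

Lemma LII3 k : 1 < k -> r + F (x + y).+1 + k = r + (F x.+1 + F y.+1) -> False.
Proof. have := Fspec x.+1; have := Fspec y.+1; have := Fspec (x + y).+1; lia. Qed.

End Arith.


Unset Implicit Arguments.

Theorem proposition4p4 (m : nat) (Hn : 2 <= m.+1)
  (sigma tau : {perm 'I_m.+1}) (Hct : ct sigma != ct tau)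
  (rho : {perm 'I_m.+1}) :
  let g := sigma^-1 * tau in
  let omega := cycle_of g ord_max in
  let pi := cycle_of g (sigma ord_max) in
  [disjoint psupp rho & psupp omega] ->
  [disjoint psupp rho & psupp pi] ->
  g = (if omega == pi then rho * omega else rho * omega * pi) ->
  exists chi : {perm 'I_m},
    [/\ [disjoint psupp rho & psupp (liftp chi)] /\
          liftp ((ct sigma)^-1 * ct tau) = rho * liftp chi,
        (* (1) *)
        hd (ct sigma) (ct tau) = hd sigma tau ->
          (omega = 1 \/ pi = 1) /\
          (is_cycle chi /\ cyc_len chi = cyc_len (omega * pi)),
        (* (2) *)
        hd (ct sigma) (ct tau) + 1 = hd sigma tau ->
          (omega = pi ->
             (is_cycle chi /\ cyc_len chi + 1 = cyc_len omega) \/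
             (exists omega' pi' : {perm 'I_m},
                 [/\ is_cycle omega', is_cycle pi',
                     [disjoint psupp omega' & psupp pi'],
                     chi = omega' * pi' &
                     cyc_len omega' + cyc_len pi' + 1 = cyc_len omega])) /\
          (omega != pi ->
             is_cycle chi /\ cyc_len chi + 1 = cyc_len omega + cyc_len pi),
        (* (3) *)
        hd (ct sigma) (ct tau) + 2 = hd sigma tau ->
          omega = pi /\ is_cycle chi /\ cyc_len chi + 2 = cyc_len omega &
        (* (4) *)
        hd (ct sigma) (ct tau) + 3 = hd sigma tau ->
          [/\ omega = pi, cyc_len omega = 3 & chi = 1]].
Proof.
move=> g omega pi Dro Drp Hg.
pose N := (@ord_max m).
have m1 : 0 < m by [].
pose x0 : 'I_m := Ordinal m1.
pose a := sigma N.
pose b := tau N.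
have gab : g a = b by rewrite /g /a /b permM permK.
pose X := if omega == pi then omega else omega * pi.
have HgX : g = rho * X by rewrite {1}Hg /X; case: ifP => _; rewrite ?mulgA.
have sX : psupp X \subset psupp omega :|: psupp pi.
  by rewrite /X; case: ifP => _; [exact: subsetUl | exact: psupp_mul_sub].
have Xfix : forall z, z \in psupp rho -> X z = z.
  move=> z zr; apply/eqP; rewrite -[_ == _]negbK -inpsupp; apply/negP => zX.
  move: (subsetP sX z zX); rewrite inE => /orP[] H.
  - by rewrite (disjointFr Dro zr) in H.
  - by rewrite (disjointFr Drp zr) in H.
have grho : forall z, z \in psupp rho -> g z = rho z.
  by move=> z zr; rewrite HgX permM Xfix // psupp_img.
have rfix : forall (c : {perm 'I_m.+1}) x, [disjoint psupp rho & psupp c] ->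
    (g x != x -> x \in psupp c) -> rho x = x.
  move=> c x D H; case: (eqVneq (rho x) x) => // xr.
  have xr' : x \in psupp rho by rewrite inpsupp.
  have : g x != x by rewrite grho.
  by move/H => xc; rewrite (disjointFr D xr') in xc.
have rN : rho N = N.
  by apply: (rfix omega) => // H; apply: cyc_supp => //; exact: porbit_id.
have ra : rho a = a.
  by apply: (rfix pi) => // H; apply: cyc_supp => //; exact: porbit_id.
have rb : rho b = b.
  apply: (rfix pi) => // H; apply: cyc_supp => //.
  by rewrite -gab; have := mem_porbit g 1 a; rewrite expg1.
pose chi' := tperm N a * X * tperm N b.
have Eg : sigma^-1 * tau = rho * X by rewrite -HgX.
have Hh : liftp ((ct sigma)^-1 * ct tau) = rho * chi'.
  rewrite liftpM liftpV !liftp_ct invMg tpermV -/N -/a -/b.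
  rewrite mulgA -(mulgA (tperm N a)) Eg mulgA (commute_tperm rN ra) /chi'.
  by rewrite !mulgA.
have chiN : chi' N = N.
  by have := liftpN ((ct sigma)^-1 * ct tau); rewrite Hh permM rN.
pose chi := ct chi'.
have Lchi : liftp chi = chi' by rewrite ct_liftp.
have Dchi : [disjoint psupp rho & psupp chi'].
  apply: disjP => z zr; rewrite inpsupp negbK /chi' !permM.
  have zN : N != z by apply/eqP => E; move: zr; rewrite -E inpsupp rN eqxx.
  have za : a != z by apply/eqP => E; move: zr; rewrite -E inpsupp ra eqxx.
  have zb : b != z by apply/eqP => E; move: zr; rewrite -E inpsupp rb eqxx.
  by rewrite tpermD // Xfix // tpermD.
have DrX : [disjoint psupp rho & psupp X].
  by apply: disjP => z zr; rewrite inpsupp negbK Xfix.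
have hd1 : hd sigma tau = #|psupp rho| + #|psupp X|.
  by rewrite hd_psupp Eg card_psupp_mul.
have hd2 : hd (ct sigma) (ct tau) = #|psupp rho| + #|psupp chi'|.
  by rewrite hd_psupp -card_psupp_liftp Hh card_psupp_mul.
have Ccl : cyc_len chi = #|psupp chi'| by rewrite /cyc_len -card_psupp_liftp Lchi.
exists chi; rewrite Lchi.
have [A EA] : exists A, tr g N = N :: A by exists (behead (tr g N)); exact: tr_cons.
have Eom : omega = cperm (N :: A) by rewrite /omega cycle_ofE EA.
have F1 : F 1 = 0 by [].
have cyc1 : cyc_len (1 : {perm 'I_m.+1}) = 0.
  by apply/eqP; rewrite cards_eq0; apply/eqP/setP => z; rewrite inpsupp perm1 eqxx inE.
have ic1 : is_cycle (1 : {perm 'I_m}).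
  by apply/existsP; exists x0; apply/subsetP => z; rewrite inpsupp perm1 eqxx.
case: (boolP (a \in porbit g N)) => aN.
-
  have Epi : pi = omega.
    have Ep : porbit g a = porbit g N by apply/eqP; rewrite eq_porbit_mem.
    by apply/permP => y; rewrite /pi /omega !permE /cycle_of_fun Ep.
  have EX : X = omega by rewrite /X Epi eqxx.
  have aNA : a \in N :: A by rewrite -EA mem_tr.
  case/splitPl: aNA EA Eom => A1 B1 La EA Eom.
  have U : uniq (N :: A1 ++ B1) by rewrite -EA tr_uniq.
  have Hb : next (N :: A1 ++ B1) a = b.
    rewrite -EA -(cpermE (tr_uniq g N)) -cycle_ofE permE /cycle_of_fun aN.
    exact: gab.
  have Echi : chi' = cperm A1 * cperm B1 by rewrite /chi' EX Eom; exact: coreI.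
  move: (U) => /= /andP[]; rewrite mem_cat negb_or => /andP[NA1 NB1].
  rewrite cat_uniq => /and3P[UA1 /hasPn DBA UB1].
  have DAB : forall x, x \in A1 -> x \notin B1.
    by move=> x xA; apply/negP => /DBA; rewrite xA.
  have [LA1 cA1 lA1] := lift_cperm x0 UA1 NA1.
  have [LB1 cB1 lB1] := lift_cperm x0 UB1 NB1.
  have cX : #|psupp X| = F (size A1 + size B1).+1.
    by rewrite EX Eom card_cperm // /= size_cat.
  have cchi : #|psupp chi'| = F (size A1) + F (size B1).
    by rewrite Echi card_psupp_mul ?cperm_disj // !card_cperm.
  have Echi2 : chi = ct (cperm A1) * ct (cperm B1).
    by apply: liftp_inj; rewrite liftpM LA1 LB1 Lchi.
  have clom : cyc_len omega = F (size A1 + size B1).+1 by rewrite /cyc_len -EX cX.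
  have ctA1 : size A1 <= 1 -> ct (cperm A1) = 1.
    by move=> H; apply: liftp_inj; rewrite LA1 liftp1 cperm_small.
  have ctB1 : size B1 <= 1 -> ct (cperm B1) = 1.
    by move=> H; apply: liftp_inj; rewrite LB1 liftp1 cperm_small.
  have isc : size A1 <= 1 \/ size B1 <= 1 -> is_cycle chi.
    by case=> H; rewrite Echi2; [rewrite ctA1 // mul1g | rewrite ctB1 // mulg1].
  have Fa := Fspec (size A1). have Fb := Fspec (size B1).
  have Fab := Fspec (size A1 + size B1).+1.
  split.
  + by split.
  + move=> H; rewrite hd1 hd2 cX cchi in H.
    have [A0 B0] := LI1 H.
    have om1 : omega = 1 by rewrite Eom cperm_small //= size_cat A0 B0.
    split; first by left.
    split; first by apply: isc; left; rewrite A0.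
    by rewrite Ccl cchi Epi om1 mulg1 cyc1 A0 B0.
  + move=> H; rewrite hd1 hd2 cX cchi in H.
    split; last by rewrite Epi eqxx.
    move=> _; right; exists (ct (cperm A1)), (ct (cperm B1)); split => //.
    * by apply: disjoint_liftp; rewrite LA1 LB1; exact: cperm_disj.
    * by rewrite lA1 lB1 clom; exact: LI2 H.
  + move=> H; rewrite hd1 hd2 cX cchi in H.
    have [H1 H2] := LI3 H.
    split => //; split; first by apply: isc.
    by rewrite Ccl cchi clom.
  + move=> H; rewrite hd1 hd2 cX cchi in H.
    have [A0 B0] := LI4 H.
    split => //; first by rewrite clom A0 B0.
    by rewrite Echi2 ctA1 ?ctB1 ?A0 ?B0 // mulg1.
-
  have [B EB] : exists B, tr g a = a :: B by exists (behead (tr g a)); exact: tr_cons.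
  have Epi : pi = cperm (a :: B) by rewrite /pi cycle_ofE EB.
  have U1 : uniq (N :: A) by rewrite -EA tr_uniq.
  have U2 : uniq (a :: B) by rewrite -EB tr_uniq.
  have D12 : forall z, z \in a :: B -> z \notin N :: A.
    move=> z; rewrite -EA -EB !mem_tr => za; apply/negP => zN.
    have E1 : porbit g z = porbit g a by apply/eqP; rewrite eq_porbit_mem.
    have E2 : porbit g z = porbit g N by apply/eqP; rewrite eq_porbit_mem.
    by move: aN; rewrite -E2 E1 porbit_id.
  have D21 : forall z, z \in N :: A -> z \notin a :: B.
    by move=> z zN; apply/negP => /D12; rewrite zN.
  have U0 : uniq (N :: A ++ a :: B).
    rewrite -cat_cons cat_uniq U1 U2 andbT; apply/hasPn => z; exact: D12.
  have Hb : head a B = b.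
    rewrite -next_head -(cpermE U2) -Epi /pi permE /cycle_of_fun porbit_id.
    exact: gab.
  have opA : omega = pi -> A = [::].
    move=> E; apply/nilP/negPn/negP => nz.
    have nz' : 0 < size A by rewrite lt0n.
    have : N \in psupp omega.
      by rewrite Eom psupp_cperm // inE mem_head.
    rewrite E Epi => /(subsetP (psupp_cperm_sub U2)); rewrite inE => /D12.
    by rewrite mem_head.
  have EX : X = omega * pi.
    rewrite /X; case: ifP => // /eqP E.
    by rewrite -E Eom (opA E) cperm_small // mulg1.
  have Echi : chi' = cperm (a :: A ++ B) by rewrite /chi' EX Eom Epi -Hb; exact: coreII.
  have Dop : [disjoint psupp (cperm (N :: A)) & psupp (cperm (a :: B))].
    exact: cperm_disj.
  have Ua : uniq (a :: A ++ B).
    by move: U0 => /= /andP[_]; rewrite -cat1s uniq_catCA cat1s.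
  have NL : N \notin a :: A ++ B.
    rewrite inE mem_cat !negb_or; apply/and3P; split.
    - by apply/eqP => E; move: (D12 N); rewrite -E !mem_head => /(_ isT).
    - by move: U1 => /andP[].
    - apply/negP => NB.
      by move: (D12 N); rewrite inE NB orbT mem_head => /(_ isT).
  have cX : #|psupp X| = F (size A).+1 + F (size B).+1.
    by rewrite EX Eom Epi card_psupp_mul // !card_cperm.
  have cchi : #|psupp chi'| = F (size A + size B).+1.
    by rewrite Echi card_cperm //= size_cat.
  have [Lc cc lc] := lift_cperm x0 Ua NL.
  have Echi2 : chi = ct (cperm (a :: A ++ B)) by apply: liftp_inj; rewrite Lc Lchi.
  have clom : cyc_len omega = F (size A).+1 by rewrite /cyc_len Eom card_cperm.
  have clpi : cyc_len pi = F (size B).+1 by rewrite /cyc_len Epi card_cperm.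
  have clop : cyc_len (omega * pi) = F (size A).+1 + F (size B).+1.
    by rewrite -cX EX.
  have clchi : cyc_len chi = F (size A + size B).+1 by rewrite Ccl cchi.
  split.
  + by split.
  + move=> H; rewrite hd1 hd2 cX cchi in H.
    have ischi : is_cycle chi by rewrite Echi2.
    split; last (split; [exact: ischi | rewrite clchi clop; exact: (@addnI #|psupp rho|)]).
    case: (LII1 H) => /size0nil E0; [left; rewrite Eom | right; rewrite Epi];
      by rewrite E0 cperm_small.
  + move=> H; rewrite hd1 hd2 cX cchi in H.
    have [H1 H2] := LII2 H.
    split.
      by move=> E; move: H1; rewrite (opA E).
    by move=> _; split; [rewrite Echi2 | rewrite clchi clom clpi].
  + move=> H; rewrite hd1 hd2 cX cchi in H.
    by case: (LII3 (isT : 1 < 2) H).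
  + move=> H; rewrite hd1 hd2 cX cchi in H.
    by case: (LII3 (isT : 1 < 3) H).
Qed.
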